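(* For every $x'\in\mathbb R^d$, $$\hat w^\top x'-\gamma(x')\;\le\; w^{*\top}_{\tilde C}x'\;\le\;\hat w^\top x'+\delta(x').$$
   Context: Let $\{(x_i,y_i)\}_{i=1}^n\subset\mathbb R^d\times\{-1,1\}$ be a training set. Let $\ell:\{-1,1\}\times\mathbb R\to\mathbb R$ be convex in its second argument, and set $\ell_i(w):=\ell(y_i,w^\top x_i)$ for $w\in\mathbb R^d$. For $C>0$ let $w^*_C$ be the (unique) minimizer over $w\in\mathbb R^d$ of $P_C(w)=\frac12\|w\|^2+C\sum_{i=1}^n\ell_i(w)$, where $\|\cdot\|$ is the Euclidean norm. Fix $\tilde C>0$ and an arbitrary vector $\hat w\in\mathbb R^d$; for each $i$ let $\xi_i\in\partial\ell_i(\hat w)$ be any subgradient of $\ell_i$ at $\hat w$, and set $g:=\hat w+\tilde C\sum_{i=1}^n\xi_i$. For $x\in\mathbb R^d$ define $\gamma(x):=\frac12(\|g\|\|x\|+g^\top x)$ and $\delta(x):=\frac12(\|g\|\|x\|-g^\top x)$. *)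

(* Defs.v *)
From HB Require Import structures.
From mathcomp Require Import all_boot all_order all_algebra.
Set Implicit Arguments. Unset Strict Implicit. Unset Printing Implicit Defensive.
Import Order.TTheory GRing.Theory Num.Theory.
Local Open Scope ring_scope.

Definition dotv (R : numDomainType) (d : nat) (u v : 'rV[R]_d) : R :=
  \sum_(i < d) u 0 i * v 0 i.

Definition normv (R : rcfType) (d : nat) (u : 'rV[R]_d) : R :=
  Num.sqrt (dotv u u).

Definition convex_fun (R : realFieldType) (f : R -> R) : Prop :=
  forall a b t : R, 0 <= t -> t <= 1 ->
    f (t * a + (1 - t) * b) <= t * f a + (1 - t) * f b.

Definition is_subgradient (R : rcfType) (d : nat) (f : 'rV[R]_d -> R)
    (w0 xi : 'rV[R]_d) : Prop :=
  forall w, f w0 + dotv xi (w - w0) <= f w.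

Definition loss_i (R : rcfType) (d : nat) (ell : R -> R -> R)
    (x : 'rV[R]_d) (y : R) (w : 'rV[R]_d) : R :=
  ell y (dotv w x).

Definition primal (R : rcfType) (d n : nat) (C : R) (ell : R -> R -> R)
    (X : 'I_n -> 'rV[R]_d) (Y : 'I_n -> R) (w : 'rV[R]_d) : R :=
  (normv w) ^+ 2 / 2 + C * \sum_(i < n) loss_i ell (X i) (Y i) w.

Definition gammav (R : rcfType) (d : nat) (g x : 'rV[R]_d) : R :=
  (normv g * normv x + dotv g x) / 2.

Definition deltav (R : rcfType) (d : nat) (g x : 'rV[R]_d) : R :=
  (normv g * normv x - dotv g x) / 2.

(* Main.v *)
Require Import Defs.
From HB Require Import structures.
From mathcomp Require Import all_boot all_order all_algebra.
From mathcomp Require Import ring lra.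
Import Order.TTheory GRing.Theory Num.Theory.
Local Open Scope ring_scope.

Section Dot.
Variables (R : rcfType) (d : nat).
Implicit Types (u v w : 'rV[R]_d).

Lemma dotvC u v : dotv u v = dotv v u.
Proof. by rewrite /dotv; apply: eq_bigr => i _; rewrite mulrC. Qed.

Lemma dotvDl u w v : dotv (u + w) v = dotv u v + dotv w v.
Proof. by rewrite /dotv -big_split; apply: eq_bigr => i _; rewrite mxE mulrDl. Qed.

Lemma dotvZl (a : R) u v : dotv (a *: u) v = a * dotv u v.
Proof. by rewrite /dotv mulr_sumr; apply: eq_bigr => i _; rewrite mxE mulrA. Qed.

Lemma dotvNl u v : dotv (- u) v = - dotv u v.
Proof. by rewrite -scaleN1r dotvZl mulN1r. Qed.

Lemma dotvBl u w v : dotv (u - w) v = dotv u v - dotv w v.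
Proof. by rewrite dotvDl dotvNl. Qed.

Lemma dotvDr u w v : dotv v (u + w) = dotv v u + dotv v w.
Proof. by rewrite !(dotvC v) dotvDl. Qed.

Lemma dotvZr (a : R) u v : dotv v (a *: u) = a * dotv v u.
Proof. by rewrite !(dotvC v) dotvZl. Qed.

Lemma dotvBr u w v : dotv v (u - w) = dotv v u - dotv v w.
Proof. by rewrite !(dotvC v) dotvBl. Qed.

Lemma dotv_suml n (f : 'I_n -> 'rV[R]_d) v :
  dotv (\sum_(i < n) f i) v = \sum_(i < n) dotv (f i) v.
Proof.
rewrite /dotv; under eq_bigr do rewrite summxE mulr_suml.
by rewrite exchange_big.
Qed.

Lemma dotvv_ge0 u : 0 <= dotv u u.
Proof. by apply: sumr_ge0 => i _; rewrite -expr2 sqr_ge0. Qed.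

Lemma CS u v : dotv u v ^+ 2 <= dotv u u * dotv v v.
Proof.
have H t : 0 <= t ^+ 2 * dotv u u - 2 * t * dotv u v + dotv v v.
  have := dotvv_ge0 (t *: u - v).
  rewrite !dotvBl !dotvBr !dotvZl !dotvZr (dotvC v u). lra.
have uu0 := dotvv_ge0 u; have vv0 := dotvv_ge0 v.
have [uup'|uun] := boolP (0 < dotv u u); last first.
  have uz : dotv u u = 0 by move: uun; rewrite -leNgt; lra.
  have [ne|e0] := boolP (dotv u v != 0); last first.
    move/negPn/eqP: e0 => e0; rewrite e0 uz; lra.
  have := H ((dotv v v + 1) / (2 * dotv u v)).
  have e : 2 * ((dotv v v + 1) / (2 * dotv u v)) * dotv u v = dotv v v + 1.
    by field.
  rewrite e uz; lra.

have := H (dotv u v / dotv u u).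
set a := dotv u u; set b := dotv u v; set c := dotv v v => h.
have e : (b / a) ^+ 2 * a - 2 * (b / a) * b + c = (a * c - b ^+ 2) / a.
  by field; rewrite /a gt_eqF.
rewrite e in h.
have : 0 <= (a * c - b ^+ 2) / a * a by apply: mulr_ge0 => //; rewrite /a; lra.
rewrite divfK; last by rewrite /a gt_eqF.
lra.
Qed.

End Dot.
Arguments dotvC {R d}. Arguments CS {R d}. Arguments dotvv_ge0 {R d}.

Theorem corollary1 (R : rcfType) (d n : nat)
    (X : 'I_n -> 'rV[R]_d) (Y : 'I_n -> R)
    (hY : forall i, Y i = 1 \/ Y i = -1)
    (ell : R -> R -> R)
    (hconv : forall y : R, (y = 1 \/ y = -1) -> convex_fun (ell y))
    (Ct : R) (hCt : 0 < Ct)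
    (wstar : 'rV[R]_d)
    (hmin : forall w : 'rV[R]_d, primal Ct ell X Y wstar <= primal Ct ell X Y w)
    (what : 'rV[R]_d) (xi : 'I_n -> 'rV[R]_d)
    (hxi : forall i, is_subgradient (loss_i ell (X i) (Y i)) what (xi i))
    (x' : 'rV[R]_d) :
  let g := what + Ct *: \sum_(i < n) xi i in
  dotv what x' - gammav g x' <= dotv wstar x' /\
  dotv wstar x' <= dotv what x' + deltav g x'.
Proof.
move=> g.
set S := \sum_(i < n) xi i.
set L := fun w => \sum_(i < n) loss_i ell (X i) (Y i) w.
have hsub : L what + dotv S (wstar - what) <= L wstar.
  rewrite /L /S dotv_suml -big_split /=; apply: ler_sum => i _; exact: hxi.
have hL t : 0 <= t -> t <= 1 ->
    L (t *: what + (1 - t) *: wstar) <= t * L what + (1 - t) * L wstar.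
  move=> t0 t1; rewrite /L !mulr_sumr -big_split /=; apply: ler_sum => i _.
  rewrite /loss_i dotvDl !dotvZl; exact: (hconv _ (hY i)).
have nsq w : normv w ^+ 2 = dotv w w by rewrite /normv sqr_sqrtr // dotvv_ge0.
set A := dotv what what; set B := dotv what wstar; set D := dotv wstar wstar.
set Sh := dotv S what; set Sw := dotv S wstar.
set q := A - 2 * B + D.
set K := B - D + Ct * (Sh - Sw).
have hq : q = dotv (what - wstar) (what - wstar).
  by rewrite /q !dotvBl !dotvBr (dotvC wstar what); rewrite -/A -/B -/D; lra.
have q0 : 0 <= q by rewrite hq dotvv_ge0.
have hsub' : L what - L wstar <= Sh - Sw.
  move: hsub; rewrite dotvBr -/Sh -/Sw; lra.
have Ht t : 0 < t -> t <= 1 -> 0 <= t * q / 2 + K.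
  move=> t0 t1.
  have := hmin (t *: what + (1 - t) *: wstar).
  rewrite /primal !nsq -/(L _) -/(L wstar).
  have hl := hL t (ltW t0) t1.
  rewrite !dotvDl !dotvDr !dotvZl !dotvZr (dotvC wstar what) -/A -/B -/D => h.
  have h2 : 0 <= t * (t * q / 2 + K).
    have : Ct * (L (t *: what + (1 - t) *: wstar)) <=
           Ct * (t * L what + (1 - t) * L wstar) by rewrite ler_pM2l.
    have : Ct * t * (L what - L wstar) <= Ct * t * (Sh - Sw).
      by rewrite ler_pM2l // mulr_gt0.
    rewrite -/(L (t *: what + (1 - t) *: wstar)) in h; rewrite /K /q; nra.
  by rewrite pmulr_rge0 in h2.
have K0 : 0 <= K.
  rewrite leNgt; apply/negP => Kn.
  have qK : 0 < q - K by lra.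
  have := Ht (- K / (q - K)).
  have tp : 0 < - K / (q - K) by rewrite divr_gt0 // oppr_gt0.
  have t1 : - K / (q - K) <= 1 by rewrite ler_pdivrMr // mul1r; lra.
  move=> /(_ tp t1).
  have e : - K / (q - K) * q / 2 + K = K * (q - 2 * K) / (2 * (q - K)).
    by field; apply/eqP; lra.
  rewrite e => h.
  have : K * (q - 2 * K) / (2 * (q - K)) < 0.
    rewrite pmulr_llt0; first by rewrite nmulr_rlt0 //; lra.
    by rewrite invr_gt0; lra.
  lra.
set v := what - wstar.
set u := v - (1/2) *: g.
have gv : dotv g v = A - B + Ct * (Sh - Sw).
  rewrite /g /v dotvDl dotvZl !dotvBr -/A -/B -/Sh -/Sw; lra.
have hq' : q = dotv v v by rewrite hq.
have ewx : dotv wstar x' = dotv what x' - dotv v x' by rewrite /v dotvBl; lra.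
clearbody v.
have vx : dotv v x' = dotv u x' + dotv g x' / 2.
  rewrite /u dotvBl dotvZl; lra.
have uu : dotv u u <= dotv g g / 4.
  rewrite /u !dotvBl !dotvBr !dotvZl !dotvZr (dotvC g v) -hq' (dotvC v g) gv /q.
  rewrite /K in K0; lra.
have ux : `|dotv u x'| <= normv g * normv x' / 2.
  rewrite /normv.
  have h := CS u x'.
  have h2 : dotv u x' ^+ 2 <= (Num.sqrt (dotv g g) * Num.sqrt (dotv x' x') / 2) ^+ 2.
    rewrite !exprMn !sqr_sqrtr ?dotvv_ge0 //.
    apply: (le_trans h).
    have := dotvv_ge0 x'; have := dotvv_ge0 u; nra.
  rewrite -(ler_pXn2r (_ : 0 < 2)%N) ?nnegrE ?normr_ge0 //; last first.
    by rewrite divr_ge0 // mulr_ge0 // sqrtr_ge0.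
  by rewrite real_normK // num_real.
rewrite /gammav /deltav ewx vx.
move: ux; rewrite ler_norml => /andP [h1 h2].
split; lra.
Qed.
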